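(* Assume $0<c<1$ and let $b=\tfrac12-c$. For each $\delta>0$ there is an irreducible aperiodic Markov subsystem $T:\bigcup_{j=1}^mJ_j\to\mathbb T$ whose maximal invariant set contains $K_\delta:=\{x\in\mathbb T:d(T^nx,b)\ge\delta\ \forall n\ge0\}$ and does not contain $b$.
   Context: $\mathbb T=\mathbb R/\mathbb Z$, $Tx=2x\bmod1$, $d$ the usual distance on $\mathbb T$. A Markov subsystem $T:\bigcup_{j=1}^mJ_j\to\mathbb T$ is given by closed subintervals $J_1,\dots,J_m$ of $\mathbb T\setminus\{b\}$ with pairwise disjoint interiors such that $T|_{J_j}$ is a homeomorphism onto the subinterval $T(J_j)$ for each $j$, and for each $j,k$ either $T(J_j^o)\cap J_k^o=\emptyset$ or $T(J_j)\supset J_k$. Its maximal invariant set is $\bigcap_{n\ge1}T^{-n}(J_1\cup\dots\cup J_m)$ (intersected with $\bigcup_jJ_j$). It is irreducible if for all $j,k$ there are $j_0=j,j_1,\dots,j_s=k$ with $T(J_{j_i})\supset J_{j_{i+1}}$ for $0\le i<s$, and an irreducible one is aperiodic if there is $N\ge1$ such that for all $j,k$ there are $j_0=j,\dots,j_N=k$ with $T(J_{j_i})\supset J_{j_{i+1}}$ for $0\le i<N$. *)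

(* Defs.v *)
(* the circle T = R/Z is modelled by 1-periodic notions on R. *)
From Stdlib Require Import Reals Lra Lia.
Open Scope R_scope.

Definition dbl (x : R) : R := frac_part (2 * x).

Fixpoint dbl_iter (n : nat) (x : R) : R :=
  match n with O => x | S n' => dbl (dbl_iter n' x) end.

Definition eqT (x y : R) : Prop := frac_part (x - y) = 0.

Definition distT (x y : R) : R :=
  Rmin (frac_part (x - y)) (1 - frac_part (x - y)).

(* a closed arc of T: the image in T of [a_start, a_start + a_len] *)
Record arc := mkArc { a_start : R; a_len : R }.

Definition in_arc (A : arc) (x : R) : Prop :=
  frac_part (x - a_start A) <= a_len A.

Definition in_arc_int (A : arc) (x : R) : Prop :=
  0 < frac_part (x - a_start A) < a_len A.

Definition covers (J : nat -> arc) (j k : nat) : Prop :=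
  forall y, in_arc (J k) y -> exists x, in_arc (J j) x /\ eqT (dbl x) y.

Definition markov_subsystem (b : R) (m : nat) (J : nat -> arc) : Prop :=
  (forall j, (j < m)%nat -> 0 < a_len (J j) < 1 /\ ~ in_arc (J j) b) /\
  (forall j k, (j < m)%nat -> (k < m)%nat -> j <> k ->
     forall x, ~ (in_arc_int (J j) x /\ in_arc_int (J k) x)) /\
  (* T restricted to J_j is injective (hence a homeomorphism onto the arc T(J_j)) *)
  (forall j, (j < m)%nat -> forall x y, in_arc (J j) x -> in_arc (J j) y ->
     eqT (dbl x) (dbl y) -> eqT x y) /\
  (forall j k, (j < m)%nat -> (k < m)%nat ->
     (~ exists x, in_arc_int (J j) x /\ in_arc_int (J k) (dbl x)) \/ covers J j k).

Definition in_union (m : nat) (J : nat -> arc) (x : R) : Prop :=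
  exists j, (j < m)%nat /\ in_arc (J j) x.

Definition max_invariant (m : nat) (J : nat -> arc) (x : R) : Prop :=
  forall n : nat, in_union m J (dbl_iter n x).

Definition trans_path (m : nat) (J : nat -> arc) (s j k : nat) : Prop :=
  exists p : nat -> nat, p O = j /\ p s = k /\
    (forall i, (i <= s)%nat -> (p i < m)%nat) /\
    (forall i, (i < s)%nat -> covers J (p i) (p (S i))).

Definition irreducible (m : nat) (J : nat -> arc) : Prop :=
  forall j k, (j < m)%nat -> (k < m)%nat -> exists s, trans_path m J s j k.

Definition aperiodic (m : nat) (J : nat -> arc) : Prop :=
  irreducible m J /\
  exists N, (1 <= N)%nat /\
    forall j k, (j < m)%nat -> (k < m)%nat -> trans_path m J N j k.

(* Main.v *)
Require Import Defs.
From Stdlib Require Import Reals Lra Lia ZArith Arith Classical.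
Open Scope R_scope.

Fixpoint val (q : nat) (s : nat -> bool) (i : nat) : nat :=
  match q with O => O | S q' => (2 * val q' s i + Nat.b2n (s (i + q')%nat))%nat end.

Lemma b2n_le1 b : (Nat.b2n b <= 1)%nat. Proof. destruct b; simpl; lia. Qed.

Lemma val_lt q s i : (val q s i < 2 ^ q)%nat.
Proof. induction q; simpl; [lia|]. pose proof (b2n_le1 (s (i+q)%nat)). lia. Qed.

Lemma val_ext q s s' i i' : (forall k, (k < q)%nat -> s (i + k)%nat = s' (i' + k)%nat) ->
  val q s i = val q s' i'.
Proof. induction q; intros H; simpl; auto. rewrite IHq by (intros; apply H; lia).
  rewrite H by lia. reflexivity. Qed.

Lemma b2n_inj a b : Nat.b2n a = Nat.b2n b -> a = b.
Proof. destruct a, b; simpl; congruence. Qed.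

Lemma val_inj q s s' i i' : val q s i = val q s' i' ->
  forall k, (k < q)%nat -> s (i + k)%nat = s' (i' + k)%nat.
Proof. induction q; intros H k Hk; [lia|]. simpl in H.
  pose proof (b2n_le1 (s (i+q)%nat)). pose proof (b2n_le1 (s' (i'+q)%nat)).
  assert (E1: val q s i = val q s' i') by lia.
  assert (E2: Nat.b2n (s (i+q)%nat) = Nat.b2n (s' (i'+q)%nat)) by lia.
  destruct (Nat.eq_dec k q). subst; apply b2n_inj; auto. apply IHq; auto; lia. Qed.

Lemma val_S_l q s i : val (S q) s i = (Nat.b2n (s i) * 2 ^ q + val q s (S i))%nat.
Proof. induction q. simpl. rewrite !Nat.add_0_r. lia.
  change (val (S (S q)) s i) with (2 * val (S q) s i + Nat.b2n (s (i + S q)%nat))%nat.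
  rewrite IHq. simpl val. replace (S i + q)%nat with (i + S q)%nat by lia.
  rewrite Nat.pow_succ_r'. set (b := Nat.b2n (s i)). set (p := (2^q)%nat).
  replace (b * (2 * p))%nat with (2 * (b * p))%nat by ring. rewrite Nat.add_succ_r. lia. Qed.

Lemma val_step q s i : (val q s (S i) + 2 ^ q * Nat.b2n (s i) = 2 * val q s i + Nat.b2n (s (i + q)%nat))%nat.
Proof. pose proof (val_S_l q s i) as H. simpl in H. set (b := Nat.b2n (s i)) in *. set (p := (2^q)%nat) in *. replace (p * b)%nat with (b * p)%nat by ring. lia. Qed.

Definition wbit (q x : nat) (k : nat) : bool := Nat.testbit x (q - 1 - k).

Lemma val_wbit_gen q x k : (x < 2 ^ q)%nat -> (k <= q)%nat -> val k (wbit q x) 0 = (x / 2 ^ (q - k))%nat.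
Proof. intros Hx. induction k; intros Hk; simpl.
  - symmetry. apply Nat.div_small. rewrite Nat.sub_0_r. exact Hx.
  - rewrite IHk by lia. unfold wbit. simpl.
    pose proof (Nat.testbit_spec' x (q - 1 - k)) as H.
    replace (q - k)%nat with (S (q - 1 - k)) by lia.
    rewrite Nat.pow_succ_r', Nat.mul_comm, <- Nat.Div0.div_div.
    replace (q - S k)%nat with (q - 1 - k)%nat by lia.
    rewrite H. set (y := (x / 2 ^ (q-1-k))%nat). pose proof (Nat.div_mod y 2). lia.
Qed.

Lemma val_wbit q x : (x < 2 ^ q)%nat -> val q (wbit q x) 0 = x.
Proof. intros. rewrite val_wbit_gen by lia. rewrite Nat.sub_diag. simpl. apply Nat.div_1_r. Qed.
From Stdlib Require Import Reals Lra Lia ZArith Arith Classical.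
Open Scope R_scope.

Lemma frac_char r f k : 0 <= f < 1 -> r = IZR k + f -> frac_part r = f.
Proof. intros H1 H2. destruct (Int_part_frac_part_spec r k f H1 H2). auto. Qed.

Lemma frac_rng r : 0 <= frac_part r < 1.
Proof. destruct (base_fp r). lra. Qed.

Lemma frac_dec r : r = IZR (Int_part r) + frac_part r.
Proof. unfold frac_part. ring. Qed.

Lemma IZR_small (z : Z) : -1 < IZR z < 1 -> z = 0%Z.
Proof. intros [H1 H2]. apply lt_IZR in H1. apply lt_IZR in H2. lia. Qed.

Lemma mul_inv_lt N f : 0 < N -> f < / N -> N * f < 1.
Proof. intros. apply (Rmult_lt_compat_l N) in H0; auto. rewrite Rinv_r in H0; lra. Qed.
Lemma mul_inv_le N f : 0 < N -> f <= / N -> N * f <= 1.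
Proof. intros. apply (Rmult_le_compat_l N) in H0; [|lra]. rewrite Rinv_r in H0; lra. Qed.

Section Arcs.
Variable n : nat.
Hypothesis Hn : (4 <= n)%nat.
Let nr := INR n.
Lemma nr_ge4 : 4 <= nr.
Proof. unfold nr. replace 4 with (INR 4) by (simpl; lra). apply le_INR; lia. Qed.
Lemma nr_IZR : nr = IZR (Z.of_nat n).
Proof. unfold nr. apply INR_IZR_INZ. Qed.

Definition arcA (A : Z) := mkArc (IZR A / nr) (/ nr).

Lemma covers_arcs (A B e M : Z) : (e = 0 \/ e = 1)%Z -> B = (2*A + e + Z.of_nat n * M)%Z ->
  forall y, in_arc (arcA B) y -> exists x, in_arc (arcA A) x /\ eqT (dbl x) y.
Proof.
  intros He HB y Hy. unfold in_arc, arcA in *; cbn [a_start a_len] in *.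
  pose proof nr_ge4 as H4. rewrite nr_IZR in *.
  set (N := IZR (Z.of_nat n)) in *.
  set (f := frac_part (y - IZR B / N)) in *.
  assert (Hf := frac_rng (y - IZR B / N)). fold f in Hf.
  assert (He' : 0 <= IZR e <= 1) by (destruct He; subst; simpl; lra).
  assert (Hi : 0 < / N <= /4) by (split; [apply Rinv_0_lt_compat; lra| apply Rinv_le_contravar; lra]).
  exists (IZR A / N + (IZR e / N + f) / 2). split.
  - rewrite (frac_char _ ((IZR e / N + f) / 2) 0).
    + unfold Rdiv. nra.
    + unfold Rdiv; split; nra.
    + simpl; field; lra.
  - unfold eqT, dbl. apply (frac_char _ _ (- M - Int_part (2 * (IZR A / N + (IZR e / N + f) / 2))
         - Int_part (y - IZR B / N))%Z); [lra|].
    pose proof (frac_dec (y - IZR B / N)) as D1. fold f in D1.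
    unfold frac_part at 1.
    rewrite !minus_IZR. rewrite !opp_IZR.
    assert (IZR B = 2 * IZR A + IZR e + N * IZR M) by (rewrite HB, !plus_IZR, !mult_IZR; reflexivity).
    set (I1 := IZR (Int_part (2 * (IZR A / N + (IZR e / N + f) / 2)))).
    set (I2 := IZR (Int_part (y - IZR B / N))) in *.
    assert (y = IZR B / N + I2 + f) by lra.
    rewrite H0, H. field. lra.
Qed.

Lemma interior_step (A B : Z) x : in_arc_int (arcA A) x -> in_arc_int (arcA B) (dbl x) ->
  exists e M, (e = 0 \/ e = 1)%Z /\ B = (2*A + e + Z.of_nat n * M)%Z.
Proof.
  unfold in_arc_int, arcA; cbn [a_start a_len]. intros H1 H2.
  pose proof nr_ge4 as H4. rewrite nr_IZR in *. set (N := IZR (Z.of_nat n)) in *.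
  pose proof (frac_dec (x - IZR A / N)) as D1.
  pose proof (frac_dec (dbl x - IZR B / N)) as D2.
  unfold dbl, frac_part at 1 in D2. unfold dbl in H2.
  set (f1 := frac_part (x - IZR A / N)) in *. set (f2 := frac_part (frac_part (2 * x) - IZR B / N)) in *.
  set (I1 := Int_part (x - IZR A / N)) in *.
  set (I2 := Int_part (2 * x)) in *.
  set (I3 := Int_part (frac_part (2 * x) - IZR B / N)) in *.
  set (z := (2 * A - B - Z.of_nat n * (I3 - 2 * I1 + I2))%Z).
  assert (Hz : IZR z = N * (f2 - 2 * f1)).
  { unfold z. rewrite !minus_IZR, !mult_IZR, !plus_IZR, !minus_IZR, !mult_IZR. fold N.
    assert (x = IZR A / N + IZR I1 + f1) by lra.
    assert (2 * x - IZR I2 - IZR B / N = IZR I3 + f2) by (unfold frac_part in D2; lra).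
    assert (HA : IZR A = N * (IZR A / N)) by (field; lra).
    assert (HB : IZR B = N * (IZR B / N)) by (field; lra).
    set (a := IZR A / N) in *. set (b := IZR B / N) in *. rewrite HA, HB.
    replace (2 * (N * a) - N * b - N * (IZR I3 - 2 * IZR I1 + IZR I2)) with (N * (2 * a - b - (IZR I3 - 2 * IZR I1 + IZR I2))) by ring.
    f_equal. lra. }
  assert (-2 < IZR z < 1).
  { rewrite Hz. assert (0 < / N <= /4) by (split; [apply Rinv_0_lt_compat; lra| apply Rinv_le_contravar; lra]).
    assert (N * f1 < 1) by (apply mul_inv_lt; lra).
    assert (N * f2 < 1) by (apply mul_inv_lt; lra).
    assert (0 <= N * f1) by nra. assert (0 <= N * f2) by nra. nra. }
  destruct H as [Ha Hb]. apply lt_IZR in Hb. apply lt_IZR in Ha.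
  exists (- z)%Z, (- (I3 - 2 * I1 + I2))%Z. split; [lia|]. unfold z. lia.
Qed.

Lemma interior_same (A B : Z) x : in_arc_int (arcA A) x -> in_arc_int (arcA B) x ->
  exists M, B = (A + Z.of_nat n * M)%Z.
Proof.
  unfold in_arc_int, arcA; cbn [a_start a_len]. intros H1 H2.
  pose proof nr_ge4 as H4. rewrite nr_IZR in *. set (N := IZR (Z.of_nat n)) in *.
  pose proof (frac_dec (x - IZR A / N)) as D1.
  pose proof (frac_dec (x - IZR B / N)) as D2.
  set (f1 := frac_part (x - IZR A / N)) in *. set (f2 := frac_part (x - IZR B / N)) in *.
  set (I1 := Int_part (x - IZR A / N)) in *. set (I2 := Int_part (x - IZR B / N)) in *.
  set (z := (A - B - Z.of_nat n * (I2 - I1))%Z).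
  assert (Hz : IZR z = N * (f2 - f1)).
  { unfold z. repeat rewrite ?minus_IZR, ?mult_IZR, ?plus_IZR. fold N.
    assert (HA : IZR A = N * (IZR A / N)) by (field; lra).
    assert (HB : IZR B = N * (IZR B / N)) by (field; lra).
    set (a := IZR A / N) in *. set (b := IZR B / N) in *. rewrite HA, HB.
    replace (N * a - N * b - N * (IZR I2 - IZR I1)) with (N * (a - b - (IZR I2 - IZR I1))) by ring.
    f_equal. lra. }
  assert (-1 < IZR z < 1).
  { rewrite Hz.
    assert (N * f1 < 1) by (apply mul_inv_lt; lra).
    assert (N * f2 < 1) by (apply mul_inv_lt; lra).
    assert (0 <= N * f1) by nra. assert (0 <= N * f2) by nra. nra. }
  apply IZR_small in H. exists (I1 - I2)%Z. unfold z in H. lia.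
Qed.

Lemma arc_inj (A : Z) x y : in_arc (arcA A) x -> in_arc (arcA A) y -> eqT (dbl x) (dbl y) -> eqT x y.
Proof.
  unfold in_arc, arcA, eqT, dbl; cbn [a_start a_len]. intros H1 H2 H3.
  pose proof nr_ge4 as H4. rewrite nr_IZR in *. set (N := IZR (Z.of_nat n)) in *.
  assert (Hi : 0 < / N <= /4) by (split; [apply Rinv_0_lt_compat; lra| apply Rinv_le_contravar; lra]).
  pose proof (frac_dec (x - IZR A / N)) as D1.
  pose proof (frac_dec (y - IZR A / N)) as D2.
  pose proof (frac_dec (frac_part (2*x) - frac_part (2*y))) as D3. rewrite H3, Rplus_0_r in D3.
  pose proof (frac_rng (x - IZR A / N)). pose proof (frac_rng (y - IZR A / N)).
  set (f1 := frac_part (x - IZR A / N)) in *. set (f2 := frac_part (y - IZR A / N)) in *.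
  unfold frac_part at 1 2 in D3.
  set (I1 := Int_part (x - IZR A / N)) in *. set (I2 := Int_part (y - IZR A / N)) in *.
  set (K := Int_part (frac_part (2 * x) - frac_part (2 * y))) in *.
  set (z := (K + Int_part (2*x) - Int_part (2*y) - 2 * I1 + 2 * I2)%Z).
  assert (Hz : IZR z = 2 * (f1 - f2)).
  { unfold z. repeat rewrite ?minus_IZR, ?mult_IZR, ?plus_IZR. lra. }
  assert (Hz0 : z = 0%Z) by (apply IZR_small; rewrite Hz; lra).
  rewrite Hz0 in Hz. apply (frac_char _ _ (I1 - I2)); [lra|]. rewrite minus_IZR. lra.
Qed.
End Arcs.

Lemma distT_le w b (k : Z) : distT w b <= Rabs (w - b - IZR k).
Proof.
  unfold distT. pose proof (frac_dec (w - b)). pose proof (frac_rng (w - b)).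
  set (f := frac_part (w - b)) in *. set (I := Int_part (w - b)) in *.
  destruct (Z.lt_total (k - I) 0) as [Hl|[He|Hg]].
  - assert (IZR (k - I) <= -1) by (apply IZR_le; lia). rewrite minus_IZR in H1.
    apply Rle_trans with f; [apply Rmin_l|]. rewrite Rabs_right; lra.
  - assert (k = I) by lia. subst k. apply Rle_trans with f; [apply Rmin_l|]. rewrite Rabs_right; lra.
  - assert (IZR (k - I) >= 1) by (apply Rle_ge, IZR_le; lia). rewrite minus_IZR in H1.
    apply Rle_trans with (1 - f); [apply Rmin_r|]. rewrite Rabs_left; lra.
Qed.

From Stdlib Require Import Reals Lra Lia ZArith Arith Classical.
Open Scope R_scope.

Section Frame.
Variables (q s0 m : nat) (b : R).
Let n := (2 ^ q)%nat.
Hypothesis Hq : (2 <= q)%nat.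
Hypothesis Hs0 : (1 <= s0 <= n)%nat.
Hypothesis Hm : (m <= n)%nat.

Lemma n_ge4 : (4 <= n)%nat.
Proof. unfold n. replace q with (2 + (q - 2))%nat by lia. rewrite Nat.pow_add_r.
  pose proof (Nat.pow_nonzero 2 (q-2)). simpl. lia. Qed.

Definition idx (w : nat) : nat := if (s0 <=? w)%nat then (w - s0)%nat else (w + n - s0)%nat.
Definition inV (w : nat) : Prop := (w < n)%nat /\ (idx w < m)%nat.
Definition vtx (j : nat) : nat := if (s0 + j <? n)%nat then (s0 + j)%nat else (s0 + j - n)%nat.

Lemma idx_spec w : (w < n)%nat -> (idx w < n)%nat /\ (s0 + idx w = w \/ s0 + idx w = w + n)%nat.
Proof. unfold idx. destruct (Nat.leb_spec s0 w); lia. Qed.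

Lemma vtx_spec j : (j < m)%nat -> inV (vtx j) /\ idx (vtx j) = j.
Proof. intros. unfold inV, vtx, idx.
  destruct (Nat.ltb_spec (s0 + j) n); [destruct (Nat.leb_spec s0 (s0 + j))| destruct (Nat.leb_spec s0 (s0 + j - n))]; lia. Qed.

Definition Jf (j : nat) : arc := arcA n (Z.of_nat (s0 + j)).

Lemma frame_markov : (forall j, (j < m)%nat -> ~ in_arc (Jf j) b) -> markov_subsystem b m Jf.
Proof.
  pose proof n_ge4 as H4. intros Hb. split; [|split; [|split]].
  - intros j Hj. split; [|apply Hb; auto]. unfold Jf, arcA; simpl.
    assert (4 <= INR n) by (replace 4 with (INR 4) by (simpl; lra); apply le_INR; lia).
    split; [apply Rinv_0_lt_compat; lra|]. apply Rle_lt_trans with (/4); [|lra].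
    apply Rinv_le_contravar; lra.
  - intros j k Hj Hk Hjk x [H1 H2]. unfold Jf in *.
    destruct (interior_same n H4 _ _ x H1 H2) as [M HM].
    destruct (Z.lt_total M 0) as [HM0|[HM0|HM0]].
    + assert (Z.of_nat n * M <= - Z.of_nat n)%Z by nia. lia.
    + subst M. lia.
    + assert (Z.of_nat n * M >= Z.of_nat n)%Z by nia. lia.
  - intros j Hj x y Hx Hy. apply (arc_inj n H4 _ x y Hx Hy).
  - intros j k Hj Hk. destruct (classic (exists x, in_arc_int (Jf j) x /\ in_arc_int (Jf k) (dbl x))) as [[x [H1 H2]]|H]; [right|left; auto].
    destruct (interior_step n H4 _ _ x H1 H2) as [e [M [He HM]]].
    intros y Hy. apply (covers_arcs n H4 _ _ e M He HM y Hy).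
Qed.

Lemma frame_graph : (exists N, (1 <= N)%nat /\ forall u v, inV u -> inV v ->
   exists Sf, val q Sf 0 = u /\ val q Sf N = v /\ forall i, (i <= N)%nat -> inV (val q Sf i)) ->
  irreducible m Jf /\ aperiodic m Jf.
Proof.
  pose proof n_ge4 as H4. intros [N [HN G]].
  assert (T : forall j k, (j < m)%nat -> (k < m)%nat -> trans_path m Jf N j k).
  { intros j k Hj Hk. destruct (vtx_spec j Hj) as [Vj Ij]. destruct (vtx_spec k Hk) as [Vk Ik].
    destruct (G _ _ Vj Vk) as [Sf [S0 [SN SV]]].
    exists (fun i => idx (val q Sf i)). split; [rewrite S0; auto|]. split; [rewrite SN; auto|].
    split; [intros i Hi; apply SV; auto|].
    intros i Hi. unfold Jf.
    pose proof (val_step q Sf i) as St. fold n in St.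
    destruct (SV i ltac:(lia)) as [W1 _]. destruct (SV (S i) ltac:(lia)) as [W2 _].
    destruct (idx_spec _ W1) as [_ E1]. destruct (idx_spec _ W2) as [_ E2].
    pose proof (b2n_le1 (Sf (i + q)%nat)) as B1. pose proof (b2n_le1 (Sf i)) as B2.
    set (e := Nat.b2n (Sf (i + q)%nat)) in *. set (s := Nat.b2n (Sf i)) in *.
    intros y Hy.
    apply (covers_arcs n H4 (Z.of_nat (s0 + idx (val q Sf i))) (Z.of_nat (s0 + idx (val q Sf (S i)))) (Z.of_nat e)
       ((if (s0 + idx (val q Sf (S i)) =? val q Sf (S i))%nat then 0 else 1)
        - 2 * (if (s0 + idx (val q Sf i) =? val q Sf i)%nat then 0 else 1) - Z.of_nat s)%Z); auto.
    + destruct e as [|[|]]; lia.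
    + destruct (Nat.eqb_spec (s0 + idx (val q Sf (S i))) (val q Sf (S i)));
      destruct (Nat.eqb_spec (s0 + idx (val q Sf i)) (val q Sf i)); destruct s as [|[|]]; lia. }
  split.
  - intros j k Hj Hk. exists N. apply T; auto.
  - split; [intros j k Hj Hk; exists N; apply T; auto|]. exists N. split; auto.
Qed.

Lemma frame_cover w : inV (Z.to_nat (Int_part (frac_part w * INR n))) -> in_union m Jf w.
Proof.
  pose proof n_ge4 as H4. intros [Hy Hi].
  set (y := Int_part (frac_part w * INR n)) in *.
  assert (N4 : 4 <= INR n) by (replace 4 with (INR 4) by (simpl; lra); apply le_INR; lia).
  pose proof (base_Int_part (frac_part w * INR n)) as [F1 F2]. fold y in F1, F2.
  pose proof (frac_rng w).
  assert (Y0 : (0 <= y)%Z).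
  { assert (-1 < IZR y) by nra. apply lt_IZR in H0. lia. }
  exists (idx (Z.to_nat y)). split; auto.
  destruct (idx_spec _ Hy) as [_ E].
  unfold Jf, in_arc, arcA; cbn [a_start a_len].
  assert (Ey : IZR y = INR (Z.to_nat y)) by (rewrite INR_IZR_INZ, Z2Nat.id; auto).
  assert (Hw : w = IZR (Int_part w) + frac_part w) by apply frac_dec.
  destruct E as [E|E].
  - rewrite (frac_char _ (frac_part w - IZR y / INR n) (Int_part w)).
    + apply Rle_trans with ((IZR y + 1) / INR n - IZR y / INR n).
      * unfold Rdiv. apply Rplus_le_compat_r. apply (Rmult_le_reg_l (INR n)); [lra|].
        field_simplify; lra.
      * right. field. lra.
    + split.
      * cut (IZR y / INR n <= frac_part w); [lra|]. apply (Rmult_le_reg_l (INR n)); [lra|]. field_simplify; lra.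
      * assert (0 <= IZR y / INR n); [|lra]. unfold Rdiv. apply Rmult_le_pos; [apply IZR_le; auto|].
        left; apply Rinv_0_lt_compat; lra.
    + rewrite <- INR_IZR_INZ, E, <- Ey. lra.
  - rewrite (frac_char _ (frac_part w - IZR y / INR n) (Int_part w - 1)).
    + apply Rle_trans with ((IZR y + 1) / INR n - IZR y / INR n).
      * unfold Rdiv. apply Rplus_le_compat_r. apply (Rmult_le_reg_l (INR n)); [lra|].
        field_simplify; lra.
      * right. field. lra.
    + split.
      * cut (IZR y / INR n <= frac_part w); [lra|]. apply (Rmult_le_reg_l (INR n)); [lra|]. field_simplify; lra.
      * assert (0 <= IZR y / INR n); [|lra]. unfold Rdiv. apply Rmult_le_pos; [apply IZR_le; auto|].
        left; apply Rinv_0_lt_compat; lra.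
    + rewrite <- INR_IZR_INZ, E, plus_INR, <- Ey, minus_IZR. rewrite Hw at 1. field. lra.
Qed.
End Frame.
From Stdlib Require Import Reals Lra Lia ZArith Arith Classical Bool.
Open Scope nat_scope.

Definition pw (q : nat) (f g : nat -> bool) (k : nat) : bool := if k <? q then f k else g (k - q).
Lemma pw_l q f g k : k < q -> pw q f g k = f k.
Proof. intros; unfold pw. destruct (Nat.ltb_spec k q); auto; lia. Qed.
Lemma pw_r q f g k : q <= k -> pw q f g k = g (k - q).
Proof. intros; unfold pw. destruct (Nat.ltb_spec k q); auto; lia. Qed.

Ltac ev := repeat first [rewrite pw_l by lia | rewrite pw_r by lia].

Lemma val_neq q S i r (rw : nat -> bool) : val q rw 0 = r ->
  (exists k, k < q /\ S (i + k) <> rw k) -> val q S i <> r.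
Proof. intros E [k [Hk Hd]] H. rewrite <- E in H. apply Hd.
  apply (val_inj q S rw i 0 H k Hk). Qed.

Lemma endpoints q u L v : u < 2 ^ q -> v < 2 ^ q -> forall F,
  val q (pw q (wbit q u) (pw L F (wbit q v))) 0 = u /\
  val q (pw q (wbit q u) (pw L F (wbit q v))) (q + L) = v.
Proof. intros Hu Hv F. split.
  - rewrite <- (val_wbit q u) at 2 by auto. apply val_ext. intros k Hk. ev. reflexivity.
  - rewrite <- (val_wbit q v) at 2 by auto. apply val_ext. intros k Hk. ev.
    f_equal. lia.
Qed.

Lemma scheme_N q a (r : nat -> bool) : 1 <= q -> r 0 = a -> r (q - 1) = a ->
  forall u v, u < 2 ^ q -> v < 2 ^ q -> exists S, val q S 0 = u /\ val q S (q + q) = v /\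
   forall i, 0 < i < q + q -> exists k, k < q /\ S (i + k) <> r k.
Proof.
  intros Hq R0 R1 u v Hu Hv. set (S := pw q (wbit q u) (pw q (fun _ => negb a) (wbit q v))).
  destruct (endpoints q u q v Hu Hv (fun _ => negb a)) as [E1 E2].
  exists S. split; auto. split; auto. intros i Hi. unfold S.
  destruct (Nat.le_gt_cases i q).
  - exists (q - 1). split; [lia|]. ev. rewrite R1. destruct a; discriminate.
  - exists 0. split; [lia|]. ev. rewrite R0. destruct a; discriminate.
Qed.

Lemma filler d P g : 2 <= P -> exists D : nat -> bool, D 0 = d /\ D 1 = negb d /\ D P = g /\
  forall k, D k <> D (S k) \/ D (S k) <> D (S (S k)).
Proof.
  intros HP.
  set (D1 := fun k => xorb d (Nat.odd k)).
  set (D2 := fun k => if k <? 2 then xorb d (Nat.odd k) else xorb d (Nat.even k)).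
  assert (A1 : forall k, D1 (S k) = negb (D1 k)).
  { intros k. unfold D1. rewrite Nat.odd_succ, <- Nat.negb_odd. destruct d, (Nat.odd k); reflexivity. }
  assert (A2 : forall k, 2 <= k -> D2 (S k) = negb (D2 k)).
  { intros k Hk. unfold D2. destruct (Nat.ltb_spec (S k) 2); [lia|]. destruct (Nat.ltb_spec k 2); [lia|].
    rewrite Nat.even_succ, <- Nat.negb_even. destruct d, (Nat.even k); reflexivity. }
  assert (N1 : forall k, D1 k <> D1 (S k) \/ D1 (S k) <> D1 (S (S k))).
  { intros k; left. rewrite A1. destruct (D1 k); discriminate. }
  assert (N2 : forall k, D2 k <> D2 (S k) \/ D2 (S k) <> D2 (S (S k))).
  { intros k. destruct k as [|[|k]].
    - left. unfold D2; simpl. destruct d; discriminate.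
    - right. unfold D2; simpl. destruct d; discriminate.
    - left. rewrite (A2 (S (S k))) by lia. destruct (D2 (S (S k))); discriminate. }
  assert (Hsw : D2 P = negb (D1 P)).
  { unfold D2, D1. destruct (Nat.ltb_spec P 2); [lia|]. rewrite <- Nat.negb_odd. destruct d, (Nat.odd P); reflexivity. }
  destruct (Bool.bool_dec (D1 P) g).
  - exists D1. repeat split; auto. unfold D1; simpl. destruct d; reflexivity.
  - exists D2. repeat split; auto.
    + unfold D2; simpl. destruct d; reflexivity.
    + rewrite Hsw. destruct (D1 P), g; auto; congruence.
Qed.

Lemma neq_of_pair (x y g : bool) : x <> y -> x <> g \/ y <> g.
Proof. destruct x, y, g; auto. Qed.

(* scheme for b = 0 : forbidden words are the constant words *)
Lemma scheme_0 q : 3 <= q -> forall u v, u < 2 ^ q -> v < 2 ^ q ->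
  exists S, val q S 0 = u /\ val q S (q + q) = v /\
   forall i, 0 < i < q + q -> forall c : bool, exists k, k < q /\ S (i + k) <> c.
Proof.
  intros Hq u v Hu Hv.
  destruct (filler (negb (wbit q u (q - 1))) (q - 1) (negb (wbit q v 0)) ltac:(lia)) as [D [D0 [D1 [DP DN]]]].
  set (S := pw q (wbit q u) (pw q D (wbit q v))).
  destruct (endpoints q u q v Hu Hv D) as [E1 E2].
  exists S. split; auto. split; auto. intros i Hi c. unfold S.
  destruct (Nat.lt_ge_cases i q).
  - destruct (neq_of_pair (wbit q u (q - 1)) (D 0) c) as [Hd|Hd].
    + rewrite D0. destruct (wbit q u (q - 1)); discriminate.
    + exists (q - 1 - i). split; [lia|]. ev. replace (i + (q - 1 - i)) with (q - 1) by lia. auto.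
    + exists (q - i). split; [lia|]. ev. replace (i + (q - i) - q) with 0 by lia. auto.
  - destruct (Nat.le_gt_cases i q).
    + assert (i = q) by lia. subst i.
      destruct (DN 0) as [Hd|Hd].
      * destruct (neq_of_pair _ _ c Hd) as [H'|H'].
        -- exists 0. split; [lia|]. ev. rewrite Nat.add_0_r, Nat.sub_diag. auto.
        -- exists 1. split; [lia|]. ev. replace (q + 1 - q) with 1 by lia. auto.
      * destruct (neq_of_pair _ _ c Hd) as [H'|H'].
        -- exists 1. split; [lia|]. ev. replace (q + 1 - q) with 1 by lia. auto.
        -- exists 2. split; [lia|]. ev. replace (q + 2 - q) with 2 by lia. auto.
    + destruct (neq_of_pair (D (q - 1)) (wbit q v 0) c) as [H'|H'].
      * rewrite DP. destruct (wbit q v 0); discriminate.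
      * exists (q + q - 1 - i). split; [lia|]. ev. replace (i + (q + q - 1 - i) - q) with (q - 1) by lia. auto.
      * exists (q + q - i). split; [lia|]. ev. replace (i + (q + q - i) - q - q) with 0 by lia. auto.
Qed.
From Stdlib Require Import Reals Lra Lia ZArith Arith Classical Bool.
Open Scope nat_scope.

Definition Rc (al : nat) (A : nat -> bool) (c : bool) (k : nat) : bool :=
  if k <? al then A k else if k =? al then c else negb c.
Lemma Rc_A al A c k : k < al -> Rc al A c k = A k.
Proof. intros; unfold Rc. destruct (Nat.ltb_spec k al); auto; lia. Qed.
Lemma Rc_mid al A c : Rc al A c al = c.
Proof. unfold Rc. destruct (Nat.ltb_spec al al); [lia|]. rewrite Nat.eqb_refl. auto. Qed.
Lemma Rc_tail al A c k : al < k -> Rc al A c k = negb c.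
Proof. intros; unfold Rc. destruct (Nat.ltb_spec k al); [lia|]. destruct (Nat.eqb_spec k al); auto; lia. Qed.

Definition Yf (a : bool) (k : nat) : bool := if k =? 0 then a else negb a.
Lemma Yf0 a : Yf a 0 = a. Proof. reflexivity. Qed.
Lemma Yfp a k : 1 <= k -> Yf a k = negb a.
Proof. intros; unfold Yf. destruct (Nat.eqb_spec k 0); auto; lia. Qed.

Lemma nb_neq (x : bool) : negb x <> x. Proof. destruct x; discriminate. Qed.
Lemma nb_neq' (x : bool) : x <> negb x. Proof. destruct x; discriminate. Qed.

Lemma scheme_D al J (A : nat -> bool) : 1 <= al -> 4 <= J ->
  forall u v, u < 2 ^ (al + 1 + J) -> v < 2 ^ (al + 1 + J) ->
  exists S, val (al + 1 + J) S 0 = u /\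
    val (al + 1 + J) S ((al + 1 + J) + ((al + 1 + J + (al + 1 + J)) + (al + 1 + J))) = v /\
   forall i, 0 < i < (al + 1 + J) + ((al + 1 + J + (al + 1 + J)) + (al + 1 + J)) ->
     forall c : bool, exists k, k < al + 1 + J /\ S (i + k) <> Rc al A c k.
Proof.
  intros Hal HJ. set (q := al + 1 + J). set (LD := q + q). intros u v Hu Hv.
  set (a := A 0).
  assert (Hdx : exists d : bool, (d = true /\ (forall k, k < q - 1 -> wbit q u (k + 1) = Rc al A true k)) \/
      (d = false /\ ~ (forall k, k < q - 1 -> wbit q u (k + 1) = Rc al A true k))).
  { destruct (classic (forall k, k < q - 1 -> wbit q u (k + 1) = Rc al A true k)); [exists true|exists false]; auto. }
  destruct Hdx as [d Hdd].
  destruct (filler d (LD - al) (negb a) ltac:(lia)) as [D [D0 [D1 [DP DN]]]].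
  set (Sq := pw q (wbit q u) (pw (LD + q) (pw LD D (Yf a)) (wbit q v))).
  destruct (endpoints q u (LD + q) v Hu Hv (pw LD D (Yf a))) as [E1 E2].
  exists Sq. split; auto. split; auto. intros i Hi c. unfold Sq.
  assert (HA0 : Rc al A c 0 = a) by (apply Rc_A; lia).
  destruct (Nat.eq_dec i 1) as [->|Hi1].
  {
    destruct Hdd as [[-> Hy]|[-> Hn]].
    - destruct c.
      + exists (q - 1). split; [lia|]. ev. replace (1 + (q - 1) - q) with 0 by lia. rewrite D0.
        rewrite Rc_tail by lia. discriminate.
      + exists al. split; [lia|]. ev. replace (1 + al) with (al + 1) by lia. rewrite Hy by lia.
        rewrite !Rc_mid. discriminate.
    - destruct c.
      + apply not_all_ex_not in Hn. destruct Hn as [k Hk].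
        apply imply_to_and in Hk. destruct Hk as [Hk1 Hk2].
        exists k. split; [lia|]. ev. replace (1 + k) with (k + 1) by lia. auto.
      + exists (q - 1). split; [lia|]. ev. replace (1 + (q - 1) - q) with 0 by lia. rewrite D0.
        rewrite Rc_tail by lia. discriminate. }
  destruct (Nat.eq_dec i 2) as [->|Hi2].
  { destruct (neq_of_pair (D 0) (D 1) (negb c)) as [H|H].
    - rewrite D0, D1. apply nb_neq'.
    - exists (q - 2). split; [lia|]. ev. replace (2 + (q - 2) - q) with 0 by lia. rewrite Rc_tail by lia. auto.
    - exists (q - 1). split; [lia|]. ev. replace (2 + (q - 1) - q) with 1 by lia. rewrite Rc_tail by lia. auto. }
  destruct (Nat.le_gt_cases i LD) as [HiL|HiL].
  { destruct (DN (i - 3)) as [H|H].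
    - destruct (neq_of_pair _ _ (negb c) H) as [H'|H'].
      + exists (q - 3). split; [lia|]. ev. replace (i + (q - 3) - q) with (i - 3) by lia. rewrite Rc_tail by lia. auto.
      + exists (q - 2). split; [lia|]. ev. replace (i + (q - 2) - q) with (S (i - 3)) by lia. rewrite Rc_tail by lia. auto.
    - destruct (neq_of_pair _ _ (negb c) H) as [H'|H'].
      + exists (q - 2). split; [lia|]. ev. replace (i + (q - 2) - q) with (S (i - 3)) by lia. rewrite Rc_tail by lia. auto.
      + exists (q - 1). split; [lia|]. ev. replace (i + (q - 1) - q) with (S (S (i - 3))) by lia. rewrite Rc_tail by lia. auto. }
  destruct (Nat.eq_dec i (LD + 1)) as [->|HiL1].
  { destruct (DN (LD - 3)) as [H|H].
    - destruct (neq_of_pair _ _ (negb c) H) as [H'|H'].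
      + exists (q - 4). split; [lia|]. ev. replace (LD + 1 + (q - 4) - q) with (LD - 3) by lia. rewrite Rc_tail by lia. auto.
      + exists (q - 3). split; [lia|]. ev. replace (LD + 1 + (q - 3) - q) with (S (LD - 3)) by lia. rewrite Rc_tail by lia. auto.
    - destruct (neq_of_pair _ _ (negb c) H) as [H'|H'].
      + exists (q - 3). split; [lia|]. ev. replace (LD + 1 + (q - 3) - q) with (S (LD - 3)) by lia. rewrite Rc_tail by lia. auto.
      + exists (q - 2). split; [lia|]. ev. replace (LD + 1 + (q - 2) - q) with (S (S (LD - 3))) by lia. rewrite Rc_tail by lia. auto. }
  destruct (Nat.le_gt_cases i (LD + J)) as [HiJ|HiJ].
  { destruct (neq_of_pair a (negb a) (negb c)) as [H|H].
    - apply nb_neq'.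
    - exists (q - (i - LD)). split; [lia|]. ev. replace (i + (q - (i - LD)) - q - LD) with 0 by lia.
      rewrite Yf0, Rc_tail by lia. auto.
    - exists (q - 1). split; [lia|]. ev. rewrite Yfp by lia. rewrite Rc_tail by lia. auto. }
  destruct (Nat.eq_dec i (LD + J + 1)) as [->|HiJ1].
  { destruct (Bool.bool_dec c a) as [->|Hc].
    - exists 0. split; [lia|]. ev. replace (LD + J + 1 + 0 - q) with (LD - al) by lia. rewrite DP, HA0.
      apply nb_neq.
    - exists al. split; [lia|]. ev. replace (LD + J + 1 + al - q - LD) with 0 by lia. rewrite Yf0, Rc_mid. auto. }
  destruct (Nat.le_gt_cases i (LD + q)) as [Hiq|Hiq].
  { destruct (Bool.bool_dec c a) as [->|Hc].
    - exists al. split; [lia|]. ev. rewrite Yfp by lia. rewrite Rc_mid. apply nb_neq.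
    - exists (q - 1). split; [lia|]. ev. rewrite Yfp by lia. rewrite Rc_tail by lia.
      destruct a, c; simpl; congruence. }
  exists 0. split; [lia|]. ev. rewrite Yfp by lia. rewrite HA0. apply nb_neq.
Qed.
From Stdlib Require Import Reals Lra Lia ZArith Arith Classical Bool.
Open Scope R_scope.

Lemma pow2_pos k : 0 < 2 ^ k. Proof. apply pow_lt; lra. Qed.

Lemma small_pow (eps : R) : 0 < eps -> exists k0, forall k, (k0 <= k)%nat -> / 2 ^ k < eps.
Proof.
  intros He. destruct (archimed (/ eps)) as [H1 _].
  exists (Z.to_nat (up (/ eps))). intros k Hk.
  assert (Hup : (0 < up (/ eps))%Z) by (apply lt_IZR; apply Rlt_trans with (/eps); [apply Rinv_0_lt_compat|]; lra).
  assert (INR (Z.to_nat (up (/eps))) < INR (2 ^ k)).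
  { apply lt_INR. pose proof (Nat.pow_gt_lin_r 2 k ltac:(lia)).
    assert (2 ^ Z.to_nat (up (/ eps)) <= 2 ^ k)%nat by (apply Nat.pow_le_mono_r; lia).
    pose proof (Nat.pow_gt_lin_r 2 (Z.to_nat (up (/ eps))) ltac:(lia)).
    eapply Nat.lt_le_trans; eauto. }
  rewrite pow_INR in H. replace (INR 2) with 2 in H by (simpl; lra). rewrite INR_IZR_INZ, Z2Nat.id in H by lia.
  rewrite <- (Rinv_inv eps). apply Rinv_lt_contravar.
  - apply Rmult_lt_0_compat; [apply Rinv_0_lt_compat; lra|apply pow2_pos].
  - lra.
Qed.

Section Fl.
Variable beta : R.
Hypothesis Hb : 0 <= beta < 1.
Definition fl (k : nat) : Z := Int_part (beta * 2 ^ k).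

Lemma fl_spec k : IZR (fl k) <= beta * 2 ^ k < IZR (fl k) + 1.
Proof. unfold fl. destruct (base_Int_part (beta * 2 ^ k)). lra. Qed.

Lemma fl_nonneg k : (0 <= fl k)%Z.
Proof. pose proof (fl_spec k). pose proof (pow2_pos k).
  assert (-1 < IZR (fl k)) by nra. apply lt_IZR in H1. lia. Qed.

Lemma fl_step k : fl (S k) = (2 * fl k)%Z \/ fl (S k) = (2 * fl k + 1)%Z.
Proof.
  pose proof (fl_spec k). unfold fl at 1. simpl pow.
  replace (beta * (2 * 2 ^ k)) with (2 * (beta * 2 ^ k)) by ring.
  destruct (Rlt_le_dec (2 * (beta * 2 ^ k)) (IZR (2 * fl k) + 1)).
  - left. symmetry. apply Int_part_spec. rewrite mult_IZR in *. lra.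
  - right. symmetry. apply Int_part_spec. repeat rewrite ?plus_IZR, ?mult_IZR in *. change (2 ^ S k) with (2 * 2 ^ k). lra.
Qed.

Lemma fl0 : fl 0 = 0%Z.
Proof. unfold fl. symmetry. apply Int_part_spec. simpl. lra. Qed.

Definition rw (k : nat) : bool := Z.odd (fl (S k)).

Lemma val_rw k : val k rw 0 = Z.to_nat (fl k).
Proof. induction k; simpl. rewrite fl0; reflexivity.
  rewrite IHk. unfold rw. pose proof (fl_nonneg k).
  destruct (fl_step k) as [E|E]; rewrite E.
  - rewrite Z.odd_even. cbn [Nat.b2n]. lia.
  - rewrite Z.odd_odd. cbn [Nat.b2n]. lia.
Qed.

Lemma choose_q (nd : ~ exists e (X : Z), beta * 2 ^ e = IZR X) :
  forall Q, exists q, (Q <= q)%nat /\ (1 <= q)%nat /\ Z.odd (fl q) = Z.odd (fl 1).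
Proof.
  intros Q0. apply NNPP. intro Hn. remember (S Q0) as Q eqn:HQ.
  assert (Hall : forall d, Z.odd (fl (Q + d)) = negb (Z.odd (fl 1))).
  { intros d. destruct (Bool.bool_dec (Z.odd (fl (Q + d))) (Z.odd (fl 1))) as [E|E].
    - exfalso. apply Hn. exists (Q + d)%nat. split; [lia|]. split; [lia|]. auto.
    - destruct (Z.odd (fl (Q + d))), (Z.odd (fl 1)); auto; congruence. }
  destruct (Z.odd (fl 1)) eqn:Ea; simpl in Hall.
  -
    assert (G : forall d, fl (Q + d) = (fl Q * 2 ^ Z.of_nat d)%Z).
    { induction d. rewrite Nat.add_0_r. simpl. lia.
      replace (Q + S d)%nat with (S (Q + d)) by lia.
      pose proof (Hall (S d)). replace (Q + S d)%nat with (S (Q + d)) in H by lia.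
      destruct (fl_step (Q + d)) as [E|E]; rewrite E in *.
      - rewrite IHd, Nat2Z.inj_succ, Z.pow_succ_r by lia. ring.
      - rewrite Z.odd_odd in H. discriminate. }
    apply nd. exists Q, (fl Q).
    pose proof (fl_spec Q) as FQ. pose proof (pow2_pos Q).
    destruct (Rle_lt_or_eq_dec _ _ (proj1 FQ)) as [Hlt|Heq]; [|lra].
    exfalso. set (eps := beta * 2 ^ Q - IZR (fl Q)).
    assert (Heps : 0 < eps) by (unfold eps; lra).
    destruct (small_pow eps Heps) as [k0 Hk0]. specialize (Hk0 k0 (le_n _)).
    pose proof (fl_spec (Q + k0)) as F2. rewrite G, mult_IZR, <- pow_IZR, pow_add in F2.
    pose proof (pow2_pos k0). 
    assert (1 < eps * 2 ^ k0).
    { apply (Rmult_lt_compat_r (2 ^ k0)) in Hk0; auto. rewrite Rinv_l in Hk0; lra. }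
    unfold eps in H1. nra.
  -
    assert (G : forall d, (fl (Q + d) + 1 = (fl Q + 1) * 2 ^ Z.of_nat d)%Z).
    { induction d. rewrite Nat.add_0_r. simpl. lia.
      replace (Q + S d)%nat with (S (Q + d)) by lia.
      pose proof (Hall (S d)) as H. replace (Q + S d)%nat with (S (Q + d)) in H by lia.
      destruct (fl_step (Q + d)) as [E|E]; rewrite E in *.
      - rewrite Z.odd_even in H. discriminate.
      - rewrite Nat2Z.inj_succ, Z.pow_succ_r by lia. replace ((fl Q + 1) * (2 * 2 ^ Z.of_nat d))%Z with (2 * ((fl Q + 1) * 2 ^ Z.of_nat d))%Z by ring. rewrite <- IHd. ring. }
    pose proof (fl_spec Q) as FQ. pose proof (pow2_pos Q).
    set (eps := IZR (fl Q) + 1 - beta * 2 ^ Q).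
    assert (Heps : 0 < eps) by (unfold eps; lra).
    destruct (small_pow eps Heps) as [k0 Hk0]. specialize (Hk0 k0 (le_n _)).
    pose proof (fl_spec (Q + k0)) as F2.
    assert (E2 : IZR (fl (Q + k0)) = (IZR (fl Q) + 1) * 2 ^ k0 - 1).
    { rewrite pow_IZR. replace 1 with (IZR 1) at 1 2 by reflexivity. rewrite <- plus_IZR, <- mult_IZR, <- G.
      rewrite plus_IZR. simpl. ring. }
    rewrite E2, pow_add in F2.
    pose proof (pow2_pos k0).
    assert (1 < eps * 2 ^ k0).
    { apply (Rmult_lt_compat_r (2 ^ k0)) in Hk0; auto. rewrite Rinv_l in Hk0; lra. }
    unfold eps in H1. nra.
Qed.
End Fl.
From Stdlib Require Import Reals Lra Lia ZArith Arith Classical Bool.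
Open Scope R_scope.

Lemma Hb_gen (n x j : nat) (b th : R) : (4 <= n)%nat -> 0 <= th < 1 ->
  INR n * frac_part b = INR x + th -> INR j + 2 - th < INR n ->
  ~ in_arc (arcA n (Z.of_nat (x + 1 + j))) b.
Proof.
  intros Hn Hth Hb Hj. unfold in_arc, arcA; cbn [a_start a_len]. intros H.
  assert (N4 : 4 <= INR n) by (replace 4 with (INR 4) by (simpl; lra); apply le_INR; lia).
  pose proof (frac_dec (b - IZR (Z.of_nat (x + 1 + j)) / INR n)) as D1.
  pose proof (frac_rng (b - IZR (Z.of_nat (x + 1 + j)) / INR n)) as R1.
  pose proof (frac_dec b) as D2.
  set (f := frac_part (b - IZR (Z.of_nat (x + 1 + j)) / INR n)) in *.
  set (K := Int_part (b - IZR (Z.of_nat (x + 1 + j)) / INR n)) in *.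
  assert (Hnf : INR n * f <= 1) by (apply mul_inv_le; lra).
  assert (Hnf0 : 0 <= INR n * f) by nra.
  set (z := (Z.of_nat n * (K - Int_part b))%Z).
  assert (Hz : IZR z = th - 1 - INR j - INR n * f).
  { unfold z. rewrite mult_IZR, minus_IZR, <- INR_IZR_INZ.
    rewrite <- INR_IZR_INZ in D1. rewrite !plus_INR in D1. simpl in D1.
    assert (Hb' : frac_part b = (INR x + th) / INR n) by (apply (Rmult_eq_reg_l (INR n)); [rewrite Hb; field|]; lra).
    assert (E : IZR K = b - (INR x + 1 + INR j) / INR n - f) by lra.
    rewrite E. rewrite D2 at 1. rewrite Hb'. field. lra. }
  assert (IZR z < 0) by (rewrite Hz; pose proof (pos_INR j); lra).
  apply lt_IZR in H0. unfold z in H0.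
  assert (K - Int_part b <= -1)%Z by nia.
  assert (Hz2 : (z <= - Z.of_nat n)%Z) by (unfold z; nia).
  apply IZR_le in Hz2. rewrite opp_IZR, <- INR_IZR_INZ in Hz2. rewrite Hz in Hz2. pose proof (pos_INR j). lra.
Qed.

Lemma cov_gen (n : nat) w b (y t k : Z) th : (4 <= n)%nat -> 0 <= th < 1 ->
  IZR y <= INR n * frac_part w < IZR y + 1 ->
  INR n * (frac_part b + IZR k) = IZR t + th ->
  (y = t \/ (th = 0 /\ y = (t - 1)%Z)) -> distT w b <= / INR n.
Proof.
  intros Hn Hth Hy Hb Hc.
  assert (N4 : 4 <= INR n) by (replace 4 with (INR 4) by (simpl; lra); apply le_INR; lia).
  apply Rle_trans with (Rabs (w - b - IZR (Int_part w - Int_part b + k))).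
  apply distT_le.
  replace (w - b - IZR (Int_part w - Int_part b + k)) with (frac_part w - (frac_part b + IZR k)).
  2:{ pose proof (frac_dec w). pose proof (frac_dec b). rewrite plus_IZR, minus_IZR. lra. }
  set (D := frac_part w - (frac_part b + IZR k)).
  assert (E : INR n * D = INR n * frac_part w - IZR t - th) by (unfold D; lra).
  assert (Rabs (INR n * D) <= 1).
  { rewrite E. destruct Hc as [->|[-> ->]].
    - apply Rabs_le. lra.
    - rewrite minus_IZR in Hy. apply Rabs_le. lra. }
  rewrite Rabs_mult, Rabs_right in H by lra.
  apply (Rmult_le_reg_l (INR n)); [lra|]. rewrite Rinv_r by lra. auto.
Qed.

Lemma least (P : nat -> Prop) : (exists n, P n) -> exists m, P m /\ forall k, (k < m)%nat -> ~ P k.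
Proof.
  intros [n Hn]. apply NNPP. intro H.
  assert (forall n, forall k, (k <= n)%nat -> ~ P k).
  { induction n0; intros k Hk HP.
    - apply H. exists k. split; auto. intros; lia.
    - apply H. exists k. split; auto. intros k' Hk'. apply IHn0. lia. }
  apply (H0 n n (le_n _) Hn).
Qed.

Lemma val_app q1 q2 s i : val (q1 + q2) s i = (val q1 s i * 2 ^ q2 + val q2 s (i + q1))%nat.
Proof. induction q2; simpl. rewrite !Nat.add_0_r. lia.
  replace (q1 + S q2)%nat with (S (q1 + q2)) by lia. simpl. rewrite IHq2.
  replace (i + (q1 + q2))%nat with (i + q1 + q2)%nat by lia. ring. Qed.

Lemma val_const q (c : bool) s i : (forall k, (k < q)%nat -> s (i + k)%nat = c) ->
  val q s i = (if c then 2 ^ q - 1 else 0)%nat.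
Proof. induction q; intros H; simpl. destruct c; auto.
  rewrite IHq by (intros; apply H; lia). rewrite H by lia.
  pose proof (Nat.pow_nonzero 2 q). destruct c; simpl; lia. Qed.
From Stdlib Require Import Reals Lra Lia ZArith Arith Classical Bool.
Open Scope R_scope.

Definition goal (b delta : R) : Prop :=
  exists (m : nat) (J : nat -> arc),
    markov_subsystem b m J /\ irreducible m J /\ aperiodic m J /\
    (forall x, (forall n : nat, distT (dbl_iter n x) b >= delta) -> max_invariant m J x) /\
    ~ max_invariant m J b.

Lemma finish q s0 m b delta : (2 <= q)%nat -> (1 <= s0 <= 2 ^ q)%nat -> (m <= 2 ^ q)%nat ->
  / INR (2 ^ q) < delta ->
  (forall j, (j < m)%nat -> ~ in_arc (Jf q s0 j) b) ->
  (forall w, ~ inV q s0 m (Z.to_nat (Int_part (frac_part w * INR (2 ^ q)))) -> distT w b <= / INR (2 ^ q)) ->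
  (exists N : nat, (1 <= N)%nat /\ (forall u v : nat, inV q s0 m u -> inV q s0 m v ->
    exists Sf : nat -> bool, val q Sf 0 = u /\ val q Sf N = v /\
      (forall i : nat, (i <= N)%nat -> inV q s0 m (val q Sf i)))) ->
  goal b delta.
Proof.
  intros Hq Hs0 Hm Hd Hb Hc G. exists m, (Jf q s0).
  split; [apply frame_markov; auto|].
  destruct (frame_graph q s0 m Hq Hs0 Hm G) as [I A].
  split; auto. split; auto. split.
  - intros x Hx n. destruct (classic (inV q s0 m (Z.to_nat (Int_part (frac_part (dbl_iter n x) * INR (2 ^ q))))))
      as [H|H].
    + apply frame_cover; auto.
    + exfalso. specialize (Hc _ H). specialize (Hx n). lra.
  - intros H. destruct (H 0%nat) as [j [Hj Hj']]. apply (Hb j Hj Hj').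
Qed.

Lemma graph_help q s0 m N (Rm : nat -> Prop) : (1 <= N)%nat ->
  (forall w, (w < 2 ^ q)%nat -> ~ Rm w -> inV q s0 m w) ->
  (forall u v, inV q s0 m u -> inV q s0 m v -> exists Sf, val q Sf 0 = u /\ val q Sf N = v /\
     forall i, (0 < i < N)%nat -> ~ Rm (val q Sf i)) ->
  exists N : nat, (1 <= N)%nat /\ (forall u v : nat, inV q s0 m u -> inV q s0 m v ->
    exists Sf : nat -> bool, val q Sf 0 = u /\ val q Sf N = v /\
      (forall i : nat, (i <= N)%nat -> inV q s0 m (val q Sf i))).
Proof.
  intros HN HV G. exists N. split; auto. intros u v Hu Hv.
  destruct (G u v Hu Hv) as [Sf [E0 [EN W]]]. exists Sf. split; auto. split; auto.
  intros i Hi. destruct (Nat.eq_dec i 0) as [->|H0]; [rewrite E0; auto|].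
  destruct (Nat.eq_dec i N) as [->|H1]; [rewrite EN; auto|].
  apply HV; [apply val_lt|]. apply W. lia.
Qed.

Lemma INR_pow2 q : INR (2 ^ q) = 2 ^ q.
Proof. rewrite pow_INR. simpl. replace (1+1) with 2 by ring. reflexivity. Qed.

Lemma floor_w q w : let y := Int_part (frac_part w * INR (2 ^ q)) in
  (0 <= y)%Z /\ (Z.to_nat y < 2 ^ q)%nat /\ IZR y <= INR (2 ^ q) * frac_part w < IZR y + 1.
Proof.
  intros y. pose proof (frac_rng w). pose proof (pow2_pos q). rewrite <- INR_pow2 in H0.
  destruct (base_Int_part (frac_part w * INR (2 ^ q))) as [F1 F2]. fold y in F1, F2.
  assert (Y0 : (0 <= y)%Z) by (assert (-1 < IZR y) by nra; apply lt_IZR in H1; lia).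
  split; auto. split; [|lra].
  assert (IZR y < INR (2 ^ q)) by nra. rewrite INR_IZR_INZ in H1. apply lt_IZR in H1. lia.
Qed.

Lemma case_Z b delta : 0 < delta -> frac_part b = 0 -> goal b delta.
Proof.
  intros Hd Hb0. destruct (small_pow delta Hd) as [q1 Hq1].
  set (q := (q1 + 3)%nat). set (n := (2 ^ q)%nat).
  assert (Hn4 : (8 <= n)%nat).
  { unfold n, q. rewrite Nat.pow_add_r. pose proof (Nat.pow_nonzero 2 q1). simpl. lia. }
  assert (Nn : INR n = 2 ^ q) by apply INR_pow2.
  assert (HnR : 8 <= INR n) by (replace 8 with (INR 8) by (simpl; lra); apply le_INR; lia).
  assert (Hinv : forall w, inV q 1 (n - 2) w <-> (w < n /\ w <> 0 /\ w <> n - 1)%nat).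
  { intros w. unfold inV, idx. fold n. destruct (Nat.leb_spec 1 w); lia. }
  apply (finish q 1 (n - 2)); try (unfold q; lia); fold n; try lia.
  - rewrite Nn. apply Hq1. unfold q; lia.
  - intros j Hj. change (1 + j)%nat with (0 + 1 + j)%nat.
    apply (Hb_gen n 0 j b 0); try lia; [lra| rewrite Hb0; simpl; lra|].
    assert (INR j + 3 <= INR n).
    { replace 3 with (INR 3) by (simpl; lra). rewrite <- plus_INR. apply le_INR. lia. }
    lra.
  - intros w Hw. destruct (floor_w q w) as [Y0 [Yn Yb]]. fold n in Y0, Yn, Yb.
    set (y := Int_part (frac_part w * INR n)) in *.
    rewrite Hinv in Hw.
    assert (y = 0%Z \/ y = Z.of_nat (n - 1))%Z by lia.
    destruct H as [H|H].
    + apply (cov_gen n w b y 0 0 0); [lia|lra|exact Yb| rewrite Hb0; simpl; lra|left; auto].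
    + apply (cov_gen n w b y (Z.of_nat n) 1 0); [lia|lra|exact Yb| |].
      * rewrite Hb0, <- INR_IZR_INZ. lra.
      * right. split; auto. lia.
  - apply (graph_help q 1 (n - 2) (q + q) (fun w => w = 0 \/ w = n - 1)%nat); [lia| |].
    + intros w Hw Hr. apply Hinv. fold n in Hw. lia.
    + intros u v Hu Hv. apply Hinv in Hu. apply Hinv in Hv.
      destruct (scheme_0 q ltac:(unfold q; lia) u v ltac:(fold n; lia) ltac:(fold n; lia)) as [Sf [E0 [EN W]]].
      exists Sf. split; auto. split; auto. intros i Hi [Hr|Hr].
      * refine (val_neq q Sf i 0 (fun _ => false) _ _ Hr).
        -- rewrite (val_const q false) by auto. reflexivity.
        -- destruct (W i Hi false) as [k [Hk Hk']]. exists k; auto.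
      * refine (val_neq q Sf i (n - 1) (fun _ => true) _ _ Hr).
        -- rewrite (val_const q true) by auto. reflexivity.
        -- destruct (W i Hi true) as [k [Hk Hk']]. exists k; auto.
Qed.

Lemma case_N b delta : 0 < delta -> ~ (exists e (X : Z), frac_part b * 2 ^ e = IZR X) -> goal b delta.
Proof.
  intros Hd nd. set (beta := frac_part b) in *.
  assert (Hbe : 0 <= beta < 1) by apply frac_rng.
  destruct (small_pow delta Hd) as [q1 Hq1].
  destruct (choose_q beta nd (q1 + 2)) as [q [Hq [Hq' Hodd]]].
  set (n := (2 ^ q)%nat).
  assert (Hn4 : (4 <= n)%nat).
  { unfold n. replace q with (2 + (q - 2))%nat by lia. rewrite Nat.pow_add_r. pose proof (Nat.pow_nonzero 2 (q-2)). simpl. lia. }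
  assert (Nn : INR n = 2 ^ q) by apply INR_pow2.
  assert (HnR : 4 <= INR n) by (replace 4 with (INR 4) by (simpl; lra); apply le_INR; lia).
  pose proof (fl_spec beta q) as Fq. pose proof (fl_nonneg beta Hbe q) as F0.
  set (x := Z.to_nat (fl beta q)).
  assert (Ex : INR x = IZR (fl beta q)) by (unfold x; rewrite INR_IZR_INZ, Z2Nat.id; auto).
  assert (Hxn : (x < n)%nat).
  { apply INR_lt. rewrite Ex, Nn. pose proof (pow2_pos q). nra. }
  set (th := INR n * beta - INR x).
  assert (Hth : 0 < th < 1).
  { unfold th. rewrite Ex, Nn. split; [|lra].
    destruct (Rle_lt_or_eq_dec _ _ (proj1 Fq)); [lra|]. exfalso. apply nd. exists q, (fl beta q). lra. }
  assert (Hinv : forall w, inV q (x + 1) (n - 1) w <-> (w < n /\ w <> x)%nat).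
  { intros w. unfold inV, idx. fold n. destruct (Nat.leb_spec (x + 1) w); lia. }
  apply (finish q (x + 1) (n - 1)); try lia; fold n.
  - rewrite Nn. apply Hq1. lia.
  - intros j Hj. apply (Hb_gen n x j b th); try lia; [lra| unfold th; fold beta; lra|].
    assert (INR j + 2 <= INR n).
    { replace 2 with (INR 2) by (simpl; lra). rewrite <- plus_INR. apply le_INR. lia. }
    lra.
  - intros w Hw. destruct (floor_w q w) as [Y0 [Yn Yb]]. fold n in Y0, Yn, Yb.
    set (y := Int_part (frac_part w * INR n)) in *.
    rewrite Hinv in Hw.
    assert (y = Z.of_nat x) by lia.
    apply (cov_gen n w b y (Z.of_nat x) 0 th); [lia|lra|exact Yb| |left; auto].
    fold beta. rewrite <- INR_IZR_INZ. unfold th. simpl. lra.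
  - apply (graph_help q (x + 1) (n - 1) (q + q) (fun w => w = x)%nat); [lia| |].
    + intros w Hw Hr. apply Hinv. fold n in Hw. lia.
    + intros u v Hu Hv. apply Hinv in Hu. apply Hinv in Hv.
      assert (R1 : rw beta (q - 1) = Z.odd (fl beta 1)).
      { unfold rw. replace (S (q - 1)) with q by lia. auto. }
      destruct (scheme_N q (Z.odd (fl beta 1)) (rw beta) ltac:(lia) eq_refl R1 u v ltac:(fold n; lia) ltac:(fold n; lia))
        as [Sf [E0 [EN W]]].
      exists Sf. split; auto. split; auto. intros i Hi Hr.
      refine (val_neq q Sf i x (rw beta) _ _ Hr).
      * rewrite val_rw; auto.
      * apply W. auto.
Qed.

Lemma dyadic_decomp beta : 0 <= beta < 1 -> beta <> 0 -> beta <> 1/2 ->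
  (exists e (X : Z), beta * 2 ^ e = IZR X) ->
  exists al M, (1 <= al)%nat /\ (M < 2 ^ al)%nat /\ beta * 2 ^ (al + 1) = INR (2 * M + 1).
Proof.
  intros Hb H0 H12 HP.
  destruct (least (fun e => exists X : Z, beta * 2 ^ e = IZR X) HP) as [e0 [[X0 HX0] Hmin]].
  assert (Hpos : 0 < beta) by lra.
  pose proof (pow2_pos e0) as Pe.
  assert (X0p : (0 < X0)%Z) by (apply lt_IZR; rewrite <- HX0; nra).
  assert (X0lt : (X0 < 2 ^ Z.of_nat e0)%Z) by (apply lt_IZR; rewrite <- HX0, <- pow_IZR; nra).
  assert (Hodd : Z.odd X0 = true).
  { destruct (Z.odd X0) eqn:E; auto. exfalso.
    assert (e0 <> 0%nat).
    { intro. subst e0. simpl in *. lia. }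
    apply (Hmin (e0 - 1)%nat ltac:(lia)). exists (Z.div2 X0).
    pose proof (Z.div2_odd X0) as D. rewrite E in D. cbn [Z.b2z] in D.
    replace e0 with (S (e0 - 1)) in HX0 by lia. simpl in HX0.
    apply (Rmult_eq_reg_l 2); [|lra]. replace (2 * IZR (Z.div2 X0)) with (IZR X0) by (rewrite D at 1; rewrite plus_IZR, mult_IZR; simpl; ring).
    rewrite <- HX0. ring. }
  assert (He0 : (2 <= e0)%nat).
  { destruct e0 as [|[|e0]].
    - simpl in *. lia.
    - simpl in X0lt. assert (X0 = 1%Z) by lia. subst. simpl in HX0. lra.
    - lia. }
  pose proof (Z.div2_odd X0) as D. rewrite Hodd in D. cbn [Z.b2z] in D.
  exists (e0 - 1)%nat, (Z.to_nat (Z.div2 X0)). split; [lia|]. split.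
  - replace e0 with (S (e0 - 1)) in X0lt by lia. rewrite Nat2Z.inj_succ, Z.pow_succ_r in X0lt by lia.
    apply Nat2Z.inj_lt. rewrite Z2Nat.id by lia. rewrite (Nat2Z.inj_pow 2). simpl (Z.of_nat 2). lia.
  - replace (e0 - 1 + 1)%nat with e0 by lia. rewrite HX0, INR_IZR_INZ. f_equal. lia.
Qed.

Lemma val_Rc al J (A : nat -> bool) M (c : bool) : (M < 2 ^ al)%nat -> (forall k, (k < al)%nat -> A k = wbit al M k) ->
  val (al + 1 + J) (Rc al A c) 0 = (if c then (2 * M + 1) * 2 ^ J else (2 * M) * 2 ^ J + (2 ^ J - 1))%nat.
Proof.
  intros HM HA. rewrite val_app, val_app.
  assert (E1 : val al (Rc al A c) 0 = M).
  { transitivity (val al (wbit al M) 0); [|apply val_wbit; auto]. apply val_ext. intros k Hk. simpl. rewrite Rc_A by lia. apply HA; lia. }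
  assert (E2 : val 1 (Rc al A c) (0 + al) = Nat.b2n c).
  { simpl. rewrite Nat.add_0_r. rewrite Rc_mid. lia. }
  assert (E3 : val J (Rc al A c) (0 + (al + 1)) = (if negb c then 2 ^ J - 1 else 0)%nat).
  { apply val_const. intros k Hk. apply Rc_tail. lia. }
  rewrite E1, E2, E3. pose proof (Nat.pow_nonzero 2 J). destruct c; simpl; lia.
Qed.

Lemma case_D b delta : 0 < delta -> frac_part b <> 0 -> frac_part b <> 1/2 ->
  (exists e (X : Z), frac_part b * 2 ^ e = IZR X) -> goal b delta.
Proof.
  intros Hd H0 H12 HP. set (beta := frac_part b) in *.
  assert (Hbe : 0 <= beta < 1) by apply frac_rng.
  destruct (dyadic_decomp beta Hbe H0 H12 HP) as [al [M [Hal [HM HbM]]]].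
  destruct (small_pow delta Hd) as [q1 Hq1].
  set (J := (q1 + 4)%nat). set (q := (al + 1 + J)%nat).
  set (n := (2 ^ q)%nat).
  assert (Hn4 : (4 <= n)%nat).
  { unfold n. replace q with (2 + (q - 2))%nat by (unfold q, J; lia). rewrite Nat.pow_add_r. pose proof (Nat.pow_nonzero 2 (q-2)). simpl. lia. }
  assert (Nn : INR n = 2 ^ q) by apply INR_pow2.
  assert (HnR : 4 <= INR n) by (replace 4 with (INR 4) by (simpl; lra); apply le_INR; lia).
  set (x := ((2 * M + 1) * 2 ^ J)%nat).
  assert (Hx1 : (1 <= x)%nat) by (unfold x; pose proof (Nat.pow_nonzero 2 J); nia).
  assert (Hxn : (x < n)%nat).
  { unfold x, n, q. rewrite !Nat.pow_add_r. pose proof (Nat.pow_nonzero 2 J). simpl (2 ^ 1)%nat. nia. }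
  assert (Hbx : INR n * beta = INR x).
  { unfold n, x, q. rewrite !INR_pow2, mult_INR, INR_pow2, !pow_add. rewrite <- HbM, pow_add. ring. }
  assert (Hinv : forall w, inV q (x + 1) (n - 2) w <-> (w < n /\ w <> x /\ w <> x - 1)%nat).
  { intros w. unfold inV, idx. fold n. destruct (Nat.leb_spec (x + 1) w); lia. }
  apply (finish q (x + 1) (n - 2)); try lia; fold n.
  - rewrite Nn. apply Hq1. unfold q, J; lia.
  - intros j Hj. apply (Hb_gen n x j b 0); try lia; [lra| fold beta; lra|].
    assert (INR j + 3 <= INR n).
    { replace 3 with (INR 3) by (simpl; lra). rewrite <- plus_INR. apply le_INR. lia. }
    lra.
  - intros w Hw. destruct (floor_w q w) as [Y0 [Yn Yb]]. fold n in Y0, Yn, Yb.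
    set (y := Int_part (frac_part w * INR n)) in *.
    rewrite Hinv in Hw.
    assert (y = Z.of_nat x \/ y = Z.of_nat x - 1)%Z by lia.
    apply (cov_gen n w b y (Z.of_nat x) 0 0); [lia|lra|exact Yb| |].
    + fold beta. rewrite <- INR_IZR_INZ. simpl. lra.
    + destruct H as [H|H]; [left; auto|right; split; auto].
  - apply (graph_help q (x + 1) (n - 2) (q + ((q + q) + q)) (fun w => w = x \/ w = x - 1)%nat); [lia| |].
    + intros w Hw Hr. apply Hinv. fold n in Hw. lia.
    + intros u v Hu Hv. apply Hinv in Hu. apply Hinv in Hv.
      destruct (scheme_D al J (wbit al M) Hal ltac:(unfold J; lia) u v ltac:(fold q n; lia) ltac:(fold q n; lia))
        as [Sf [E0 [EN W]]].
      fold q in E0, EN, W.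
      exists Sf. split; auto. split; auto. intros i Hi [Hr|Hr].
      * refine (val_neq q Sf i x (Rc al (wbit al M) true) _ _ Hr).
        -- unfold q. rewrite (val_Rc al J (wbit al M) M true HM) by auto. reflexivity.
        -- apply W. auto.
      * refine (val_neq q Sf i (x - 1) (Rc al (wbit al M) false) _ _ Hr).
        -- unfold q. rewrite (val_Rc al J (wbit al M) M false HM) by auto. unfold x.
           pose proof (Nat.pow_nonzero 2 J). nia.
        -- apply W. auto.
Qed.

Theorem proposition6p2 (c : R) (hc : 0 < c < 1) (delta : R) (hdelta : 0 < delta) :
  exists (m : nat) (J : nat -> arc),
    markov_subsystem (1/2 - c) m J /\ irreducible m J /\ aperiodic m J /\
    (forall x, (forall n : nat, distT (dbl_iter n x) (1/2 - c) >= delta) ->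
       max_invariant m J x) /\
    ~ max_invariant m J (1/2 - c).
Proof.
  change (goal (1/2 - c) delta).
  assert (H12 : frac_part (1/2 - c) <> 1/2).
  { intro H. pose proof (frac_dec (1/2 - c)). rewrite H in H0.
    assert (-1 < IZR (Int_part (1/2 - c)) < 0) by lra.
    destruct H1 as [H1 H2]. apply lt_IZR in H1. apply lt_IZR in H2. lia. }
  destruct (Req_dec (frac_part (1/2 - c)) 0) as [H0|H0].
  - apply case_Z; auto.
  - destruct (classic (exists e (X : Z), frac_part (1/2 - c) * 2 ^ e = IZR X)) as [HD|HN].
    + apply case_D; auto.
    + apply case_N; auto.
Qed.
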